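(* Let $n,k\ge 1$ and let $\mathfrak{a}\in\mathcal{A}_n^k$ be such that $\mathrm{Der}_k(\mathfrak{a})$ is nonempty. Then: 1) $t_1(\mathfrak{a})=t_2(\mathfrak{a})$, and, listing the slots of type I or type II in increasing order of their index, their types alternate, beginning with a slot of type I; 2) $\mathrm{des}(\mathfrak{a})=\mathrm{des}(\mathrm{Der}_k(\mathfrak{a}))+t_1^{+}(\mathfrak{a})+t_3^{+}(\mathfrak{a})$ and $\mathrm{dez}(\mathfrak{a})=\mathrm{des}(\mathrm{Der}_k(\mathfrak{a}))+t_2^{+}(\mathfrak{a})+t_3^{+}(\mathfrak{a})$.
   Context: $\mathfrak{S}_n$ is the set of permutations of $[n]=\{1,\dots,n\}$; $\mathrm{FIX}(\pi)=\{i:\pi(i)=i\}$. For $k\ge1$, a $k$-arrangement of $[n]$ is a pair $\mathfrak{a}=(\pi,\phi)$ with $\pi\in\mathfrak{S}_n$ and $\phi:\mathrm{FIX}(\pi)\to\{-1,\dots,-k\}$ arbitrary; $\mathcal{A}_n^k$ is the set of them. The positive reduction of an integer word replaces every occurrence of its $i$-th smallest positive letter by $i$ (negative letters unchanged). The derangement form $\mathrm{df}_k(\mathfrak{a})$ is obtained from $\pi(1)\cdots\pi(n)$ by replacing $\pi(i)$ with $\phi(i)$ for each $i\in\mathrm{FIX}(\pi)$ and then applying positive reduction; the permutation form $\mathrm{pf}_k(\mathfrak{a})$ is obtained likewise, replacing only for $i\in\mathrm{FIX}(\pi)$ with $\phi(i)\ne-k$. For an integer word $w=w_1\cdots w_n$,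 $\mathrm{des}(w)=|\{i\in[n-1]:w_i>w_{i+1}\}|$; $\mathrm{des}(\mathfrak{a})=\mathrm{des}(\mathrm{pf}_k(\mathfrak{a}))$ and $\mathrm{dez}(\mathfrak{a})=\mathrm{des}(\mathrm{df}_k(\mathfrak{a}))$. The weak derangement part $\mathrm{Der}_k(\mathfrak{a})$ is the word obtained from $\mathrm{df}_k(\mathfrak{a})$ by deleting all letters $-k$; say it is $w=w_1\cdots w_m$. It is the derangement form of a unique $k$-arrangement $(\sigma,\phi')$ of $[m]$ with $\phi'$ never taking the value $-k$; its excedance word is $\mathbf{e}(w)=e_1\cdots e_m$ where $e_j=E$ if $\sigma(j)>j$ and $e_j=N$ if $\sigma(j)\le j$. (Equivalently, if $w_j$ comes from the letter at position $i_j$ of $\pi$, then $e_j=E$ iff $\pi(i_j)>i_j$.) Write $\mathrm{df}_k(\mathfrak{a})=S_0w_1S_1w_2\cdots S_{m-1}w_mS_m$, where each slot $S_i$ ($0\le i\le m$) is a possibly empty block of letters $-k$. Set $w_0=w_{m+1}=+\infty$ and $e_0=e_{m+1}=E$. The slot $S_i$ is of type I if $w_i>w_{i+1}$ and $(e_i,e_{i+1})=(E,N)$; type II if $w_i\le w_{i+1}$ and $(e_i,e_{i+1})=(N,E)$; type III if $w_i\le w_{i+1}$ and $(e_i,e_{i+1})\ne(N,E)$; type IV if $w_i>w_{i+1}$ and $(e_i,e_{i+1})\ne(E,N)$. $t_j(\mathfrak{a})$ is the number of slots (empty or not) of type $j$ ($j=1,2,3,4$ for I, II, III, IV), and $t_j^+(\mathfrak{a})$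 the number of nonempty slots of type $j$. *)

(* Defs.v *)
From mathcomp Require Import all_boot all_order all_algebra all_fingroup.
Set Implicit Arguments. Unset Strict Implicit. Unset Printing Implicit Defensive.
Import Order.TTheory GRing.Theory Num.Theory.
Local Open Scope ring_scope.

(* A k-arrangement of [n] is encoded by (pi, phi) with pi : 'S_n a
   permutation of 'I_n = {0,..,n-1} (position/value i stands for i+1), and
   phi : {ffun 'I_n -> 'I_k}; only the restriction of phi to FIX(pi) is
   used.  The value j : 'I_k stands for the negative letter -(j+1), so
   the letter -k corresponds to val j = k.-1. *)

Definition negletter (k : nat) (j : 'I_k) : int := - ((val j).+1)%:Z.

Definition posred (w : seq int) : seq int :=
  [seq (if 0 < x then (size (undup [seq y <- w | (0 < y) && (y <= x)]))%:Z
        else x) | x <- w].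

Definition des (w : seq int) : nat :=
  count (fun p : int * int => p.2 < p.1) (zip w (behead w)).

Definition df (n k : nat) (pi : 'S_n) (phi : {ffun 'I_n -> 'I_k}) : seq int :=
  posred [seq (if pi i == i then negletter (phi i)
               else ((val (pi i)).+1)%:Z) | i <- enum 'I_n].

Definition pf (n k : nat) (pi : 'S_n) (phi : {ffun 'I_n -> 'I_k}) : seq int :=
  posred [seq (if (pi i == i) && (val (phi i) != k.-1) then negletter (phi i)
               else ((val (pi i)).+1)%:Z) | i <- enum 'I_n].

Definition des_arr n k (pi : 'S_n) (phi : {ffun 'I_n -> 'I_k}) : nat :=
  des (pf pi phi).
Definition dez_arr n k (pi : 'S_n) (phi : {ffun 'I_n -> 'I_k}) : nat :=
  des (df pi phi).

Definition Der n k (pi : 'S_n) (phi : {ffun 'I_n -> 'I_k}) : seq int :=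
  [seq x <- df pi phi | x != - (k%:Z)].

Definition der_pos n k (pi : 'S_n) (phi : {ffun 'I_n -> 'I_k}) : seq 'I_n :=
  [seq i <- enum 'I_n | ~~ ((pi i == i) && (val (phi i) == k.-1))].

(* excedance word of Der: true = E, false = N  (e_j = E iff pi(i_j) > i_j) *)
Definition exc_word n k (pi : 'S_n) (phi : {ffun 'I_n -> 'I_k}) : seq bool :=
  [seq (val i < val (pi i))%N | i <- der_pos pi phi].

(* sizes of the slots S_0, ..., S_m of a word, where c is the letter -k *)
Fixpoint slot_sizes (c : int) (s : seq int) : seq nat :=
  match s with
  | [::] => [:: 0%N]
  | x :: s' => let r := slot_sizes c s' in
               if x == c then (head 0%N r).+1 :: behead r else 0%N :: r
  end.

(* w_i with sentinels w_0 = w_{m+1} = +oo (None) *)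
Definition wx (w : seq int) (i : nat) : option int :=
  if (i == 0%N) || (size w < i)%N then None else Some (nth 0 w i.-1).
(* e_i with sentinels e_0 = e_{m+1} = E (true) *)
Definition ex (e : seq bool) (i : nat) : bool :=
  if (i == 0%N) || (size e < i)%N then true else nth true e i.-1.
Definition gtx (a b : option int) : bool :=
  match a, b with
  | None, None => false
  | None, Some _ => true
  | Some _, None => false
  | Some x, Some y => y < x
  end.

(* type of slot S_i: 1 = I, 2 = II, 3 = III, 4 = IV *)
Definition slot_type (w : seq int) (e : seq bool) (i : nat) : nat :=
  let a := ex e i in let b := ex e i.+1 in
  if gtx (wx w i) (wx w i.+1) then (if a && ~~ b then 1%N else 4%N)
  else (if ~~ a && b then 2%N else 3%N).

Definition arr_slot_type n k (pi : 'S_n) (phi : {ffun 'I_n -> 'I_k}) (i : nat)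
  : nat := slot_type (Der pi phi) (exc_word pi phi) i.

Definition slot_idx n k (pi : 'S_n) (phi : {ffun 'I_n -> 'I_k}) : seq nat :=
  iota 0 (size (Der pi phi)).+1.

Definition tcount n k (pi : 'S_n) (phi : {ffun 'I_n -> 'I_k}) (j : nat) : nat :=
  count (fun i => arr_slot_type pi phi i == j) (slot_idx pi phi).

Definition tplus n k (pi : 'S_n) (phi : {ffun 'I_n -> 'I_k}) (j : nat) : nat :=
  count (fun i => (arr_slot_type pi phi i == j) &&
                  (0 < nth 0 (slot_sizes (- (k%:Z)) (df pi phi)) i)%N)
        (slot_idx pi phi).

Definition typeI_II_seq n k (pi : 'S_n) (phi : {ffun 'I_n -> 'I_k}) : seq nat :=
  [seq arr_slot_type pi phi i | i <- slot_idx pi phi &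
     arr_slot_type pi phi i \in [:: 1%N; 2%N]].

(* Main.v *)
Require Import Defs.
From mathcomp Require Import all_boot all_order all_algebra all_fingroup.
From mathcomp Require Import zify.
Set Implicit Arguments. Unset Strict Implicit. Unset Printing Implicit Defensive.
Import Order.TTheory GRing.Theory Num.Theory.

Lemma des_cons a u : des (a :: u) =
  ((if u is b :: _ then (b < a)%R : nat else 0) + des u)%N.
Proof. by case: u. Qed.

Lemma st0 a w b e : slot_type (a :: w) (b :: e) 0 = if b then 4 else 1.
Proof. by rewrite /slot_type /wx /ex /=; case: b. Qed.

Lemma st1 a a' w b b' e : slot_type (a :: a' :: w) (b :: b' :: e) 1 =
  if (a' < a)%R then (if b && ~~ b' then 1 else 4)
  else (if ~~ b && b' then 2 else 3).
Proof. by rewrite /slot_type /wx /ex /=. Qed.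

Lemma st1b a b : slot_type [:: a] [:: b] 1 = if b then 3 else 2.
Proof. by rewrite /slot_type /wx /ex /=; case: b. Qed.

Lemma stSS a w b e i : slot_type (a :: w) (b :: e) i.+2 = slot_type w e i.+1.
Proof. by rewrite /slot_type /wx /ex /=. Qed.

Section Abs.
Variables (T : eqType) (x0 : T) (d p : T -> int) (K e : T -> bool) (c : int).
Hypothesis HK : forall x, K x -> d x = c.
Hypothesis HnK : forall x, ~~ K x -> (c < d x)%R.
Hypothesis Hp : forall x, ~~ K x -> p x = d x.

Definition R x y := [&& (K x && K y) ==> (p x <= p y)%R,
   (~~ K x && K y) ==> ((p y < d x)%R == e x) &
   (K x && ~~ K y) ==> ((d y < p x)%R == ~~ e y)].
Definition R2 x y := (e x && ~~ e y ==> (d y < d x)%R) &&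
                     (~~ e x && e y ==> (d x < d y)%R).
Definition Hyp2 (s : seq T) := forall i j, (i < j < size s)%N ->
  ~~ K (nth x0 s i) -> ~~ K (nth x0 s j) ->
  (forall l, (i < l < j)%N -> K (nth x0 s l)) -> R2 (nth x0 s i) (nth x0 s j).

Definition W s := [seq d x | x <- s & ~~ K x].
Definition Ew s := [seq e x | x <- s & ~~ K x].
Definition SZ s := slot_sizes c (map d s).
Definition cnt s j := count (fun i => (slot_type (W s) (Ew s) i == j) &&
   (0 < nth 0 (SZ s) i)%N) (iota 0 (size (W s)).+1).
Definition TS s := [seq slot_type (W s) (Ew s) i | i <- iota 0 (size (W s)).+1 &
   slot_type (W s) (Ew s) i \in [:: 1; 2]%N].

Lemma Hyp2_tail x s : Hyp2 (x :: s) -> Hyp2 s.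
Proof.
move=> H i j /andP[ij js] ki kj hb.
apply: (H i.+1 j.+1) => //=; first by rewrite ltnS ij ltnS.
by case=> [|l] //= /andP[a b]; apply: hb; apply/andP; split.
Qed.

Lemma filter_find (a : pred T) s : has a s ->
  [seq x <- s | a x] = nth x0 s (find a s) :: [seq x <- drop (find a s).+1 s | a x].
Proof.
elim: s => //= z s IH; case: (boolP (a z)) => az /=; first by rewrite drop0.
by move=> /IH.
Qed.

Lemma allK_sizes s : all K s -> SZ s = [:: size s].
Proof.
rewrite /SZ; elim: s => //= z s IH /andP[kz /IH ->].
by rewrite HK // eqxx.
Qed.

Lemma allK_desd s : all K s -> des (map d s) = 0.
Proof.
elim: s => //= z s IH /andP[kz ks]; rewrite des_cons IH //.
case: s ks {IH} => //= y s /andP[ky _]; rewrite !HK //; by rewrite ltxx.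
Qed.

Lemma allK_desp z s : all K (z :: s) -> path R z s -> des (map p (z :: s)) = 0.
Proof.
elim: s z => //= y s IH z /and3P[kz ky ks] /andP[rzy pys].
rewrite des_cons IH ?ky //=.
move: rzy; rewrite /R kz ky /= => /andP[h _].
by rewrite ltNge h.
Qed.

Lemma allK_W s : all K s -> W s = [::] /\ Ew s = [::].
Proof. rewrite /W /Ew; elim: s => //= z s IH /andP[-> /IH[-> ->]] //. Qed.


Arguments W s : simpl never.
Arguments slot_type : simpl never.
Arguments Ew s : simpl never.
Arguments SZ s : simpl never.

Lemma shift_count (P Q : pred nat) m n : (0 < n)%N ->
  (forall i, (0 < i)%N -> P i.+1 = Q i) -> count P (iota n.+1 m) = count Q (iota n m).
Proof. elim: m n => //= m IH n n0 H; rewrite H // IH // ltnW. Qed.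

Lemma shift_filter (f g : nat -> nat) (L : seq nat) m n : (0 < n)%N ->
  (forall i, (0 < i)%N -> f i.+1 = g i) ->
  [seq f i | i <- iota n.+1 m & f i \in L] = [seq g i | i <- iota n m & g i \in L].
Proof.
elim: m n => //= m IH n n0 H; rewrite H //; case: ifP => _ /=; rewrite IH ?H //.
Qed.

Lemma countC (a : pred nat) x l : count a (x :: l) = a x + count a l.
Proof. by []. Qed.
Lemma iotaC n m : iota n m.+1 = n :: iota n.+1 m.
Proof. by []. Qed.
Lemma fmC (f : nat -> nat) (L : seq nat) x l :
  [seq f i | i <- x :: l & f i \in L] =
  (if f x \in L then [:: f x] else [::]) ++ [seq f i | i <- l & f i \in L].
Proof. by rewrite /=; case: ifP. Qed.

Lemma W_K x s : K x -> W (x :: s) = W s.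
Proof. by move=> kx; rewrite /W /= kx. Qed.
Lemma Ew_K x s : K x -> Ew (x :: s) = Ew s.
Proof. by move=> kx; rewrite /Ew /= kx. Qed.
Lemma W_nK x s : ~~ K x -> W (x :: s) = d x :: W s.
Proof. by move=> kx; rewrite /W /= kx. Qed.
Lemma Ew_nK x s : ~~ K x -> Ew (x :: s) = e x :: Ew s.
Proof. by move=> kx; rewrite /Ew /= kx. Qed.
Lemma SZ_K x s : K x -> SZ (x :: s) = (head 0 (SZ s)).+1 :: behead (SZ s).
Proof. by move=> kx; rewrite /SZ /= HK // eqxx. Qed.
Lemma SZ_nK x s : ~~ K x -> SZ (x :: s) = 0 :: SZ s.
Proof. by move=> kx; rewrite /SZ /= gt_eqF ?HnK. Qed.

Lemma cnt_split s j : cnt s j =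
  ((slot_type (W s) (Ew s) 0 == j) && (0 < nth 0 (SZ s) 0)%N) +
  count (fun i => (slot_type (W s) (Ew s) i == j) && (0 < nth 0 (SZ s) i)%N)
    (iota 1 (size (W s))).
Proof. by []. Qed.

Lemma TS_split s : TS s =
  (if slot_type (W s) (Ew s) 0 \in [:: 1; 2]%N then [:: slot_type (W s) (Ew s) 0] else [::]) ++
  [seq slot_type (W s) (Ew s) i | i <- iota 1 (size (W s)) &
   slot_type (W s) (Ew s) i \in [:: 1; 2]%N].
Proof. by rewrite /TS /=; case: ifP. Qed.

Lemma main_abs s : sorted R s -> Hyp2 s -> has (fun x => ~~ K x) s ->
  [/\ exists h, TS s = flatten (nseq h [:: 1; 2]%N),
      des (map p s) = (des (W s) + cnt s 1 + cnt s 3)%N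
    & des (map d s) = (des (W s) + cnt s 2 + cnt s 3)%N].
Proof.
elim: s => // x s IH Hs H2 Hh.
have Hs' : sorted R s := path_sorted Hs.
have H2' := Hyp2_tail H2.
case: (boolP (K x)) => kx.
- have hs : has (fun x => ~~ K x) s by move: Hh => /=; rewrite kx.
  have [IH1 IH2 IH3] := IH Hs' H2' hs.
  have eTS : TS (x :: s) = TS s by rewrite /TS W_K // Ew_K.
  have ecnt : forall j, cnt (x :: s) j =
     ((slot_type (W s) (Ew s) 0 == j) : nat) +
     count (fun i => (slot_type (W s) (Ew s) i == j) && (0 < nth 0 (SZ s) i)%N)
       (iota 1 (size (W s))).
    move=> j; rewrite cnt_split W_K // Ew_K // SZ_K // /= andbT; congr (_ + _).
    apply: eq_in_count => i; rewrite mem_iota; case: i => // i _.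
    by rewrite /= nth_behead.
  case: s Hs Hs' H2' hs IH1 IH2 IH3 eTS ecnt {IH H2 Hh} => [|z s] // Hs Hs' H2' hs IH1 IH2 IH3 eTS ecnt.
  have rxz : R x z by case/andP: Hs.
  case: (boolP (K z)) => kz.
  + have a0 : (0 < nth 0 (SZ (z :: s)) 0)%N by rewrite SZ_K.
    rewrite !cnt_split a0 !andbT -!ecnt in IH2 IH3.
    split; first by rewrite eTS.
    * rewrite W_K // -IH2 map_cons des_cons /=.
      move: rxz; rewrite /R kx kz /= => /andP[h _]; by rewrite ltNge h.
    * by rewrite W_K // -IH3 map_cons des_cons /= (HK kx) (HK kz) ltxx.
  + have a0 : nth 0 (SZ (z :: s)) 0 = 0 by rewrite SZ_nK.
    rewrite !cnt_split a0 !andbF !add0n in IH2 IH3.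
    have t0 : slot_type (W (z :: s)) (Ew (z :: s)) 0 = if e z then 4 else 1.
      by rewrite W_nK // Ew_nK // st0.
    rewrite !ecnt t0 (W_K _ kx).
    split; first by rewrite eTS.
    * rewrite map_cons des_cons /= IH2 Hp //.
      move: rxz; rewrite /R kx (negbTE kz) /= => /eqP ->.
      case: (e z) => /=; lia.
    * rewrite map_cons des_cons /= IH3 (HK kx) (lt_gtF (HnK kz)) /=.
      case: (e z) => /=; lia.
case: (boolP (has (fun x => ~~ K x) s)) => hs; last first.
  have aK : all K s.
    by apply/allP => z zs; apply: contraNT hs => kz; apply/hasP; exists z.
  have [eW eE] := allK_W aK.
  have eSZ := allK_sizes aK.
  have eW1 : W (x :: s) = [:: d x] by rewrite W_nK // eW.
  have eE1 : Ew (x :: s) = [:: e x] by rewrite Ew_nK // eE.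
  have eSZ1 : SZ (x :: s) = [:: 0; size s] by rewrite SZ_nK // eSZ.
  have ecnt : forall j, cnt (x :: s) j =
      ((if e x then 3 else 2) == j) && (0 < size s)%N.
    by move=> j; rewrite /cnt eW1 eE1 eSZ1 /= st1b andbF add0n addn0.
  split.
  - rewrite /TS eW1 eE1 /= st0 st1b.
    by case: (e x); [exists 0 | exists 1].
  - move: ecnt; case: s aK Hs eW1 {IH Hs' H2' hs eW eE eSZ eSZ1 eE1 H2 Hh} => [|z s] aK Hs eW1 ecnt.
      by rewrite !ecnt eW1 !andbF.
    rewrite !ecnt eW1 map_cons des_cons /=.
    case/andP: Hs => rxz pzs.
    rewrite allK_desp // (Hp kx).
    move: rxz; rewrite /R (negbTE kx) (allP aK z (mem_head _ _)) /= => /andP[/eqP -> _].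
    by case: (e x).
  - move: ecnt; case: s aK Hs eW1 {IH Hs' H2' hs eW eE eSZ eSZ1 eE1 H2 Hh} => [|z s] aK Hs eW1 ecnt.
      by rewrite !ecnt eW1 !andbF.
    rewrite !ecnt eW1 map_cons des_cons allK_desd //= (HK (allP aK z (mem_head _ _))).
    by rewrite (HnK kx); case: (e x).
have [IH1 IH2 IH3] := IH Hs' H2' hs.
pose y := nth x0 s (find (fun x => ~~ K x) s).
have ky : ~~ K y := nth_find x0 hs.
have [w' eWs] : exists w', W s = d y :: w'.
  by rewrite /W (filter_find hs) /=; eexists.
have [e' eEs] : exists e', Ew s = e y :: e'.
  by rewrite /Ew (filter_find hs) /=; eexists.
have r2 : R2 x y.
  have := H2 0 (find (fun x => ~~ K x) s).+1; apply => //=.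
    by rewrite ltnS -has_find hs.
  case=> // l; rewrite ltnS => /andP[_ lf].
  by move: (before_find x0 lf) => /= /negbFE.
have eW1 : W (x :: s) = d x :: d y :: w' by rewrite W_nK // eWs.
have eE1 : Ew (x :: s) = e x :: e y :: e' by rewrite Ew_nK // eEs.
pose a0 := nth 0 (SZ s) 0.
pose T1 := slot_type (d x :: d y :: w') (e x :: e y :: e') 1.
pose rest j := count (fun i => (slot_type (W s) (Ew s) i == j) &&
   (0 < nth 0 (SZ s) i)%N) (iota 1 (size (W s))).
have t0s : slot_type (W s) (Ew s) 0 = if e y then 4 else 1.
  by rewrite eWs eEs st0.
have t0n : slot_type (W (x :: s)) (Ew (x :: s)) 0 = if e x then 4 else 1.
  by rewrite eW1 eE1 st0.
have cold : forall j, cnt s j =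
    (((if e y then 4 else 1) == j) && (0 < a0)%N) + rest j.
  by move=> j; rewrite cnt_split t0s.
have cnew : forall j, cnt (x :: s) j = ((T1 == j) && (0 < a0)%N) + rest j.
  move=> j; rewrite cnt_split SZ_nK // [nth 0 (0 :: _) 0]/= andbF add0n eW1 eE1.
  rewrite [size _]/= iotaC countC -/T1; congr (_ + _); rewrite /rest eWs eEs.
  by apply: shift_count => // -[|i] // _; rewrite ?stSS.
pose Rest := [seq slot_type (W s) (Ew s) i | i <- iota 1 (size (W s)) &
   slot_type (W s) (Ew s) i \in [:: 1; 2]%N].
have TSold : TS s = (if e y then [::] else [:: 1%N]) ++ Rest.
  by rewrite TS_split t0s; case: (e y).
have TSnew : TS (x :: s) = (if e x then [::] else [:: 1%N]) ++
   ((if T1 \in [:: 1; 2]%N then [:: T1] else [::]) ++ Rest).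
  rewrite TS_split t0n.
  congr (_ ++ _); first by case: (e x).
  rewrite eW1 eE1 [size _]/= iotaC fmC -/T1; congr (_ ++ _).
  rewrite /Rest eWs eEs; by apply: shift_filter => // -[|i] // _; rewrite ?stSS.
have hg1 : (e x && ~~ e y) ==> (d y < d x)%R by case/andP: r2.
have hg2 : (~~ e x && e y) ==> ~~ (d y < d x)%R.
  case/andP: r2 => _ /implyP h; apply/implyP => /h /lt_gtF ->; done.
have eT1 : T1 = if (d y < d x)%R then (if e x && ~~ e y then 1 else 4)
   else (if ~~ e x && e y then 2 else 3) by rewrite /T1 st1.
have desW : des (W (x :: s)) = (d y < d x)%R + des (W s).
  by rewrite eW1 eWs des_cons.
have [z [s' es]] : exists z s', s = z :: s' by case: (s) hs => // z s' _; exists z, s'.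
have [hd hp] : des (map d (x :: s)) =
      (if (0 < a0)%N then 1 else (d y < d x)%R : nat) + des (map d s) /\
    des (map p (x :: s)) =
      (if (0 < a0)%N then (e x : nat) else (d y < d x)%R : nat) + des (map p s).
  have rxz : R x z by move: Hs; rewrite es => /andP[].
  case: (boolP (K z)) => kz.
    have -> : (0 < a0)%N by rewrite /a0 es SZ_K.
    rewrite es !map_cons !des_cons /= (HK kz) (Hp kx) (HnK kx); split=> //.
    by move: rxz; rewrite /R (negbTE kx) kz /= => /andP[/eqP -> _].
  have -> : a0 = 0 by rewrite /a0 es SZ_nK.
  have ey : y = z by rewrite /y es /= kz.
  by rewrite ey es !map_cons !des_cons /= (Hp kx) (Hp kz).
split.
- case: IH1 => h eh; rewrite TSnew; move: eh; rewrite TSold eT1.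
  move: hg1 hg2; case: (e x); case: (e y); case: (d y < d x)%R => //= _ _ eh;
    try by exists h; rewrite -eh.
  by exists h.+1; rewrite /= -eh.
- rewrite hp IH2 desW !cnew !cold eT1.
  move: hg1 hg2; case: (e x); case: (e y); case: (d y < d x)%R;
    case: (0 < a0)%N => //= _ _; lia.
- rewrite hd IH3 desW !cnew !cold eT1.
  move: hg1 hg2; case: (e x); case: (e y); case: (d y < d x)%R;
    case: (0 < a0)%N => //= _ _; lia.
Qed.

End Abs.

Definition gr (w : seq int) (x : int) : int :=
  if (0 < x)%R then Posz (size (undup [seq y <- w | (0 < y)%R && (y <= x)%R])) else x.

Lemma posredE w : posred w = map (gr w) w.
Proof. by []. Qed.

Lemma gr_pos w x : x \in w -> (0 < x)%R -> (0 < gr w x)%R.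
Proof.
move=> xw x0; rewrite /gr x0 ltz_nat lt0n size_eq0 -size_eq0 -lt0n.
have : x \in undup [seq y <- w | (0 < y)%R && (y <= x)%R].
  by rewrite mem_undup mem_filter x0 lexx xw.
by case: (undup _).
Qed.

Lemma gr_npos w x : (x <= 0)%R -> gr w x = x.
Proof. by move=> x0; rewrite /gr; case: ifP => //; rewrite ltNge x0. Qed.

Lemma gr_lt w : {in w &, forall x y, (x < y)%R -> (gr w x < gr w y)%R}.
Proof.
move=> x y xw yw xy.
case: (ltrP 0 x) => x0.
  have y0 : (0 < y)%R by apply: lt_trans xy.
  rewrite /gr x0 y0 ltz_nat.
  set A := undup _; set B := undup _.
  have : (size (y :: A) <= size B)%N.
    apply: uniq_leq_size.
      rewrite /= undup_uniq andbT mem_undup mem_filter negb_and.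
      by rewrite (lt_geF xy) andbF.
    move=> z; rewrite inE => /orP[/eqP ->|].
      by rewrite mem_undup mem_filter y0 lexx yw.
    rewrite !mem_undup !mem_filter => /andP[/andP[z0 zx] zw].
    by rewrite z0 zw (le_trans zx (ltW xy)).
  by [].
case: (ltrP 0 y) => y0.
  rewrite gr_npos //.
  exact: le_lt_trans x0 (gr_pos yw y0).
by rewrite !gr_npos.
Qed.

Lemma gr_mono w : {in w &, forall x y, (gr w x < gr w y)%R = (x < y)%R}.
Proof.
move=> x y xw yw; case: (ltrP x y) => xy; first by rewrite gr_lt.
case: (eqVneq x y) => [->|ne]; first by rewrite ltxx.
have yx : (y < x)%R by rewrite lt_neqAle eq_sym ne xy.
by apply/negbTE; rewrite -leNgt ltW // gr_lt.
Qed.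

Lemma gr_eqc w c : (c < 0)%R -> {in w, forall x, (gr w x == c) = (x == c)}.
Proof.
move=> c0 x xw; case: (ltrP 0 x) => x0; last by rewrite gr_npos.
have := gr_pos xw x0 => g0.
rewrite gt_eqF ?(lt_trans c0) // gt_eqF // (lt_trans c0) //.
Qed.

Lemma des_map (g : int -> int) u :
  {in u &, forall x y, (g x < g y)%R = (x < y)%R} -> des (map g u) = des u.
Proof.
elim: u => // a u IH H; rewrite map_cons des_cons [in RHS]des_cons IH; last first.
  by move=> x y xu yu; apply: H; rewrite inE ?xu ?yu orbT.
case: u {IH} H => // b u H /=; rewrite H // ?inE ?eqxx ?orbT //.
Qed.

Lemma wx_map (g : int -> int) u i : wx (map g u) i = omap g (wx u i).
Proof.
rewrite /wx size_map; case: ifP => // h; rewrite (nth_map 0%R) //.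
move/negbT: h; rewrite negb_or -ltnNge; case: i => //= i /andP[_]; by [].
Qed.

Lemma wx_mem u i : if wx u i is Some a then a \in u else true.
Proof.
rewrite /wx; case: ifP => // h; apply: mem_nth.
move/negbT: h; rewrite negb_or -ltnNge; case: i => //= i /andP[_]; by [].
Qed.

Lemma st_map (g : int -> int) u e i :
  {in u &, forall x y, (g x < g y)%R = (x < y)%R} ->
  slot_type (map g u) e i = slot_type u e i.
Proof.
move=> H; rewrite /slot_type !wx_map.
have := wx_mem u i; have := wx_mem u i.+1.
by case: (wx u i) => [a|]; case: (wx u i.+1) => [b|] //= bu au; rewrite H.
Qed.

Lemma ss_map (g : int -> int) c u : {in u, forall x, (g x == c) = (x == c)} ->
  slot_sizes c (map g u) = slot_sizes c u.
Proof.
elim: u => // a u IH H /=; rewrite H ?mem_head // IH //.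
by move=> x xu; apply: H; rewrite inE xu orbT.
Qed.

Lemma count_fl1 h : count (pred1 1%N) (flatten (nseq h [:: 1; 2]%N)) = h.
Proof. by elim: h => //= h ->. Qed.
Lemma count_fl2 h : count (pred1 2%N) (flatten (nseq h [:: 1; 2]%N)) = h.
Proof. by elim: h => //= h ->. Qed.

Lemma nth_fl h j : (j < size (flatten (nseq h [:: 1; 2]%N)))%N ->
  nth 0 (flatten (nseq h [:: 1; 2]%N)) j = (if odd j then 2 else 1).
Proof.
elim: h j => // h IH [|[|j]] //= hj.
by rewrite IH //; case: (odd j).
Qed.

Section Inst.
Variables (n k : nat) (pi : 'S_n) (phi : {ffun 'I_n -> 'I_k}).
Hypothesis k0 : (0 < k)%N.

Definition dI (i : 'I_n) : int :=
  if pi i == i then negletter (phi i) else Posz (val (pi i)).+1.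
Definition pI (i : 'I_n) : int :=
  if (pi i == i) && (val (phi i) != k.-1) then negletter (phi i)
  else Posz (val (pi i)).+1.
Definition KI (i : 'I_n) := (pi i == i) && (val (phi i) == k.-1).
Definition eI (i : 'I_n) := (val i < val (pi i))%N.
Definition cI : int := (- Posz k)%R.

Lemma eqv (i j : 'I_n) : (i == j) = (val i == val j).
Proof. by []. Qed.

Lemma HKI i : KI i -> dI i = cI.
Proof.
rewrite /KI /dI /cI /negletter => /andP[-> /eqP h]; rewrite h.
have := ltn_ord (phi i); lia.
Qed.

Lemma HnKI i : ~~ KI i -> (cI < dI i)%R.
Proof.
rewrite /KI /dI /cI /negletter; case: (pi i == i) => /= h; last lia.
have := ltn_ord (phi i); move: h; lia.
Qed.

Lemma HpI i : ~~ KI i -> pI i = dI i.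
Proof. by rewrite /KI /pI /dI; case: (pi i == i) => //= ->. Qed.

Lemma RI (a b : 'I_n) : val b = (val a).+1 -> R dI pI KI eI a b.
Proof.
move=> hab.
have i1 : pi b == b -> val (pi a) != val b.
  move=> /eqP hb; apply/negP => /eqP h.
  have : pi a = pi b by rewrite hb; apply: val_inj.
  move/perm_inj => hab'; move: hab; rewrite hab'; lia.
have i2 : pi a == a -> val (pi b) != val a.
  move=> /eqP ha; apply/negP => /eqP h.
  have : pi b = pi a by rewrite ha; apply: val_inj.
  move/perm_inj => hab'; move: hab; rewrite hab'; lia.
move: i1 i2; rewrite /R /KI /dI /pI /eI /negletter !eqv.
have : (val (phi a) < k)%N := ltn_ord (phi a).
have : (val (phi b) < k)%N := ltn_ord (phi b).
case: (val (pi a) =P val a) => ha; case: (val (pi b) =P val b) => hb;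
case: (val (phi a) =P k.-1) => pa; case: (val (phi b) =P k.-1) => pb; move: hab ha hb pa pb; rewrite /= => *; lia.
Qed.

Lemma sortedI : sorted (R dI pI KI eI) (enum 'I_n).
Proof.
case E: (enum 'I_n) => [//|x0 s]; rewrite -E.
apply/(sortedP x0) => i; rewrite size_enum_ord => hi.
apply: RI; rewrite /= !nth_enum_ord //; exact: ltnW.
Qed.

Lemma hyp2I x0 : Hyp2 x0 dI KI eI (enum 'I_n).
Proof.
move=> i j /andP[ij jn] ka kb hb; rewrite size_enum_ord in jn.
have va : val (nth x0 (enum 'I_n) i) = i by rewrite /= nth_enum_ord // (ltn_trans ij jn).
have vb : val (nth x0 (enum 'I_n) j) = j by rewrite /= nth_enum_ord.
move: ka kb va vb; set a := nth x0 _ i; set b := nth x0 _ j => ka kb va vb.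
have between : forall l : 'I_n, (i < val l < j)%N -> pi l = l.
  move=> l hl; have := hb (val l) hl; rewrite nth_ord_enum /KI.
  by case/andP => /eqP.
have hpa : (i < val (pi a))%N -> (j <= val (pi a))%N.
  move=> h1; rewrite leqNgt; apply/negP => h2.
  have := between (pi a); rewrite h1 h2 => /(_ isT) /perm_inj hh.
  by move: h1; rewrite hh va ltnn.
move: ka kb hpa; rewrite /R2 /KI /dI /eI /negletter !eqv.
case: (val (pi a) =P val a) => ha; case: (val (pi b) =P val b) => hb';
move: va vb ij ha hb'; rewrite /= => *; lia.
Qed.
End Inst.

Unset Implicit Arguments.
Theorem lemma2p5 (n k : nat) (pi : 'S_n) (phi : {ffun 'I_n -> 'I_k}) :
  (0 < n)%N -> (0 < k)%N -> Der pi phi != [::] ->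
  [/\ tcount pi phi 1 = tcount pi phi 2,
      (forall j, (j < size (typeI_II_seq pi phi))%N ->
         nth 0%N (typeI_II_seq pi phi) j = (if odd j then 2%N else 1%N)),
      des_arr pi phi = (des (Der pi phi) + tplus pi phi 1 + tplus pi phi 3)%N
    & dez_arr pi phi = (des (Der pi phi) + tplus pi phi 2 + tplus pi phi 3)%N].
Proof.
move=> n0 k0 hD.
pose x0 : 'I_n := Ordinal n0.
pose s := enum 'I_n.
pose d := dI pi phi. pose p := pI pi phi. pose K := KI pi phi. pose e := eI pi.
pose D0 := map d s. pose P0 := map p s.
have hc : (cI k < 0)%R by rewrite /cI; lia.
have edf : df pi phi = map (gr D0) D0 by [].
have epf : pf pi phi = map (gr P0) P0 by [].
have WD : {subset W d K s <= D0}.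
  by move=> x /mapP[i]; rewrite mem_filter => /andP[_ iS] ->; apply: map_f.
have eDer : Der pi phi = map (gr D0) (W d K s).
  rewrite /Der edf filter_map /W; congr (map _ _).
  rewrite /D0 filter_map; congr (map _ _); apply: eq_in_filter => i _ /=.
  rewrite -/(cI k) gr_eqc ?map_f ?mem_enum //.
  rewrite /d /K; case: (boolP (KI pi phi i)) => ki; first by rewrite HKI // eqxx.
  by rewrite gt_eqF // HnKI.
have mono : {in W d K s &, forall x y, (gr D0 x < gr D0 y)%R = (x < y)%R}.
  by move=> x y /WD xD /WD yD; apply: gr_mono.
have esize : size (Der pi phi) = size (W d K s) by rewrite eDer size_map.
have eT : forall i, arr_slot_type pi phi i = slot_type (W d K s) (Ew K e s) i.
  by move=> i; rewrite /arr_slot_type eDer st_map.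
have eSS : slot_sizes (- (k%:Z))%R (df pi phi) = SZ d (cI k) s.
  by rewrite edf ss_map // => x xD; rewrite gr_eqc.
have hs : has (fun x => ~~ K x) s.
  by rewrite has_filter; move: hD; rewrite eDer /W; apply: contraNneq => ->.
have [[h eh] h2 h3] := main_abs (@HKI n k pi phi k0) (@HnKI n k pi phi k0) (@HpI n k pi phi)
   (@sortedI n k pi phi k0) (@hyp2I n k pi phi k0 x0) hs.
have etp : forall j, tplus pi phi j = cnt d K e (cI k) s j.
  move=> j; rewrite /tplus /cnt /slot_idx esize eSS.
  by apply: eq_count => i; rewrite eT.
have eTS : typeI_II_seq pi phi = TS d K e s.
  rewrite /typeI_II_seq /TS /slot_idx esize (eq_map eT); congr map.
  by apply: eq_filter => i; rewrite eT.
have etc : forall j, (j \in [:: 1; 2]%N) ->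
    tcount pi phi j = count (pred1 j) (TS d K e s).
  move=> j hj; rewrite /tcount /slot_idx esize /TS count_map count_filter.
  apply: eq_count => i; rewrite /= eT.
  by case: eqP => //= ->.
split.
- by rewrite !etc // eh count_fl1 count_fl2.
- by move=> j; rewrite eTS eh; apply: nth_fl.
- rewrite /des_arr epf des_map; last by move=> x y xP yP; apply: gr_mono.
  by rewrite eDer des_map // !etp.
- rewrite /dez_arr edf des_map; last by move=> x y xP yP; apply: gr_mono.
  by rewrite eDer des_map // !etp.
Qed.
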